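(* Let $n\ge 2$ and $d\ge 2$, and let $\ell=\mathrm{lcm}(2,3,\ldots,n)+1$. Then the cyclic Kautz digraph $CK(d,\ell)$ has girth greater than $n$ (if it contains a directed cycle). Consequently, there exist cyclic Kautz digraphs of arbitrarily large girth.
   Context: The cyclic Kautz digraph $CK(d,\ell)$ has vertex set $\{x_1\ldots x_\ell\in\mathbb Z_{d+1}^\ell : x_i\neq x_{i+1}\ (1\le i\le \ell-1),\ x_\ell\neq x_1\}$ and arcs $x_1x_2\ldots x_\ell\to x_2\ldots x_\ell y$ for every $y\in\mathbb Z_{d+1}$ with $y\neq x_2,x_\ell$. The girth is the length of a shortest directed cycle. *)

(* Defs.v *)
From mathcomp Require Import all_boot.
Set Implicit Arguments. Unset Strict Implicit. Unset Printing Implicit Defensive.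

(* Vertices of CK(d,l): words x_1 ... x_l over Z_{d+1} (represented by 'I_d.+1,
   0-indexed positions 0..l-1) with consecutive letters distinct and x_l <> x_1. *)
Definition ck_vertex (d l : nat) (x : seq 'I_d.+1) : Prop :=
  size x = l /\
  (forall i, i.+1 < l -> nth ord0 x i <> nth ord0 x i.+1) /\
  nth ord0 x l.-1 <> nth ord0 x 0.

Definition ck_arc (d l : nat) (x y : seq 'I_d.+1) : Prop :=
  @ck_vertex d l x /\ @ck_vertex d l y /\
  (forall i, i.+1 < l -> nth ord0 y i = nth ord0 x i.+1) /\
  nth ord0 y l.-1 <> nth ord0 x 1 /\
  nth ord0 y l.-1 <> nth ord0 x l.-1.

Definition ck_cycle (d l : nat) (c : seq (seq 'I_d.+1)) : Prop :=
  0 < size c /\ uniq c /\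
  forall i, i < size c -> @ck_arc d l (nth [::] c i) (nth [::] c (i.+1 %% size c)).

Definition lcm_upto (n : nat) : nat := \big[lcmn/1]_(2 <= i < n.+1) i.

(* Main.v *)
Require Import Defs.
From mathcomp Require Import all_boot.

Lemma shift_lem d l (c : seq (seq 'I_d.+1)) :
  @ck_cycle d l c -> forall j a, j < l ->
  nth ord0 (nth [::] c (a %% size c)) j = nth ord0 (nth [::] c ((a + j) %% size c)) 0.
Proof.
move=> [k0 [_ Harc]] j; elim: j => [|j IH] a hj; first by rewrite addn0.
have ha : a %% size c < size c by rewrite ltn_mod.
have [_ [_ [Hs _]]] := Harc _ ha.
rewrite -Hs // IH; last by apply: ltnW.
have -> : ((a %% size c).+1 + j) %% size c = (a + j.+1) %% size c.
  by rewrite addSn -addnS modnDml.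
done.
Qed.

Theorem mainTheorem10 (n d : nat) (hn : 2 <= n) (hd : 2 <= d) :
  forall c : seq (seq 'I_d.+1),
    @ck_cycle d (lcm_upto n).+1 c -> n < size c.
Proof.
move=> c Hc; rewrite ltnNge; apply/negP => hk.
have Hc' := Hc; case: Hc' => [k0 [_ Harc]].
have Hdiv : size c %| lcm_upto n.
  case E: (size c) => [|[|k]]; first by rewrite E in k0.
    by rewrite dvd1n.
  rewrite /lcm_upto.
  rewrite (bigD1_seq k.+2) /=; first exact: dvdn_lcml.
    rewrite mem_index_iota; rewrite -E ltnS hk andbT. by rewrite E.
  exact: iota_uniq.
have := @shift_lem d _ c Hc (lcm_upto n) 0 (ltnSn _).
rewrite mod0n add0n (eqP Hdiv) => Heq.
have [[_ [_ Hv]] _] := Harc 0 k0.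
by apply: Hv; rewrite /= Heq.
Qed.
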